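(* Let $(D,\mathrm{left},\mathrm{right})$ be an interval poset with order $\sqsubseteq$, and let $\le$ be the relation on $\max(D)$ given by $a\le b$ iff $a=\mathrm{left}(z)$ and $b=\mathrm{right}(z)$ for some $z\in D$. Then for all $x,y\in D$, $$x\sqsubseteq y\iff \mathrm{left}(x)\le\mathrm{left}(y)\le\mathrm{right}(y)\le\mathrm{right}(x).$$
   Context: For a poset $(D,\sqsubseteq)$, $\max(D)$ is its set of maximal elements and $x\sqcap y$ denotes the infimum of $\{x,y\}$. An interval poset is a poset $D$ with two functions $\mathrm{left},\mathrm{right}:D\to\max(D)$ such that (only the infima named here are assumed to exist): (i) for all $x\in D$, $x=\mathrm{left}(x)\sqcap\mathrm{right}(x)$; (ii) for all $x,y\in D$, if $\mathrm{right}(x)=\mathrm{left}(y)$ then $x\sqcap y$ exists and $\mathrm{left}(x\sqcap y)=\mathrm{left}(x)$, $\mathrm{right}(x\sqcap y)=\mathrm{right}(y)$; (iii) for each $x\in D$ and each $p\in\max(D)$ with $x\sqsubseteq p$, the infima $\mathrm{left}(x)\sqcap p$ and $p\sqcap\mathrm{right}(x)$ exist and $\mathrm{left}(\mathrm{left}(x)\sqcap p)=\mathrm{left}(x)$, $\mathrm{right}(\mathrm{left}(x)\sqcap p)=p$, $\mathrm{left}(p\sqcap\mathrm{right}(x))=p$, $\mathrm{right}(p\sqcap\mathrm{right}(x))=\mathrm{right}(x)$. The relation $\le$ is a partial order on $\max(D)$. *)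

(* Defs.v *)
Section IntervalPosets.
Variables (D : Type) (le : D -> D -> Prop).

Definition is_partial_order : Prop :=
  (forall x, le x x) /\
  (forall x y, le x y -> le y x -> x = y) /\
  (forall x y z, le x y -> le y z -> le x z).

Definition is_maximal (p : D) : Prop := forall q, le p q -> q = p.

Definition is_inf (x y z : D) : Prop :=
  le z x /\ le z y /\ (forall w, le w x -> le w y -> le w z).

(* left, right : D -> max(D) modelled as functions D -> D landing in max(D) *)
Record IntervalPoset (left right : D -> D) : Prop := {
  ip_order : is_partial_order;
  ip_left_max : forall x, is_maximal (left x);
  ip_right_max : forall x, is_maximal (right x);
  ip_i : forall x, is_inf (left x) (right x) x;
  ip_ii : forall x y, right x = left y ->
    exists z, is_inf x y z /\ left z = left x /\ right z = right y;
  ip_iii : forall x p, is_maximal p -> le x p ->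
    (exists z, is_inf (left x) p z /\ left z = left x /\ right z = p) /\
    (exists z, is_inf p (right x) z /\ left z = p /\ right z = right x)
}.

Definition max_le (left right : D -> D) (a b : D) : Prop :=
  exists z, a = left z /\ b = right z.

End IntervalPosets.

(* Main.v *)
Require Import Defs.

Theorem mainTheorem7 (D : Type) (le : D -> D -> Prop) (left right : D -> D)
  (HD : IntervalPoset D le left right) (x y : D) :
  le x y <->
  (max_le D left right (left x) (left y) /\
   max_le D left right (left y) (right y) /\
   max_le D left right (right y) (right x)).
Proof.
  destruct HD as [[Hrefl [Hanti Htrans]] Hlm Hrm Hi Hii Hiii].
  assert (Hdet : forall z w, left z = left w -> right z = right w -> z = w).
  { intros z w E1 E2.
    destruct (Hi z) as [a1 [a2 a3]]. destruct (Hi w) as [b1 [b2 b3]].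
    apply Hanti.
    - apply b3; [rewrite <- E1 | rewrite <- E2]; assumption.
    - apply a3; [rewrite E1 | rewrite E2]; assumption. }
  split.
  - intros Hxy. destruct (Hi y) as [y1 [y2 _]].
    split; [| split].
    + destruct (Hiii x (left y) (Hlm y) (Htrans _ _ _ Hxy y1)) as [[z [_ [E1 E2]]] _].
      exists z. auto.
    + exists y. auto.
    + destruct (Hiii x (right y) (Hrm y) (Htrans _ _ _ Hxy y2)) as [_ [z [_ [E1 E2]]]].
      exists z. auto.
  - intros [[z1 [E1 E2]] [_ [z3 [E3 E4]]]].
    destruct (Hii z1 y (eq_sym E2)) as [w1 [[w1a [w1b _]] [F1 F2]]].
    assert (G : right w1 = left z3) by congruence.
    destruct (Hii w1 z3 G) as [w2 [[w2a [w2b _]] [F3 F4]]].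
    assert (w2 = x) by (apply Hdet; congruence).
    subst w2. apply (Htrans _ _ _ w2a w1b).
Qed.
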